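(* Let $U\subseteq\mathbb{R}^4$ be open with coordinates $(x^1,x^2,x^3,x^4)$ and let $a,b,p,q,s$ be real constants with $a^2+b^2\neq0$. Consider the Lorentzian metric $$g=2\,dx^1dx^4+(dx^2)^2+(dx^3)^2+\Big(x^4\big(a(x^2)^2+b(x^3)^2\big)+p(x^2)^2+2qx^2x^3+s(x^3)^2\Big)(dx^4)^2$$ on $U$. Then: (a) $(U,g)$ is Einstein if and only if it is Ricci flat, if and only if $b=-a$ and $s=-p$; (b) $(U,g)$ is conformally flat if and only if $b=a$, $s=p$ and $q=0$.
   Context: Einstein means $\varrho=c\,g$ for a real constant $c$, where $\varrho$ is the Ricci tensor; Ricci flat means $\varrho=0$; conformally flat means the Weyl tensor $W_{ijkh}=R_{ijkh}-\frac12(g_{ik}\varrho_{jh}+g_{jh}\varrho_{ik}-g_{ih}\varrho_{jk}-g_{jk}\varrho_{ih})+\frac{\tau}{6}(g_{ik}g_{jh}-g_{ih}g_{jk})$ vanishes identically, $\tau$ the scalar curvature. *)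

(* Defs.v *)
From HB Require Import structures.
From mathcomp Require Import all_boot all_order all_algebra.
From mathcomp Require Import all_classical all_reals all_analysis.
Set Implicit Arguments. Unset Strict Implicit. Unset Printing Implicit Defensive.
Import Order.TTheory GRing.Theory Num.Theory.
Import numFieldNormedType.Exports.
Local Open Scope ring_scope.
Local Open Scope classical_set_scope.

Section Riem.
Variable R : realType.

(* Points of R^4 are row vectors; coordinate x^(k+1) is x 0 k, k : 'I_4. *)
Definition pt := 'rV[R]_4.

Definition evec (i : 'I_4) : pt := delta_mx 0 i.

Definition partial (i : 'I_4) (f : pt -> R) (x : pt) : R := 'D_(evec i) f x.

Definition metric := 'I_4 -> 'I_4 -> pt -> R.

Definition gmat (g : metric) (x : pt) : 'M[R]_4 := \matrix_(i, j) g i j x.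

Definition ginv (g : metric) (i j : 'I_4) (x : pt) : R := invmx (gmat g x) i j.

Definition christoffel (g : metric) (k i j : 'I_4) (x : pt) : R :=
  2^-1 * \sum_(l < 4) ginv g k l x *
    (partial i (g j l) x + partial j (g i l) x - partial l (g i j) x).

(* R(d_i, d_j) d_k = \sum_m Rup i j k m d_m, with
   R(X,Y) = nabla_X nabla_Y - nabla_Y nabla_X - nabla_[X,Y] *)
Definition Rup (g : metric) (i j k m : 'I_4) (x : pt) : R :=
  partial i (christoffel g m j k) x - partial j (christoffel g m i k) x
  + \sum_(l < 4) (christoffel g l j k x * christoffel g m i l x
                  - christoffel g l i k x * christoffel g m j l x).

(* R_ijkh := g(R(d_i,d_j) d_h, d_k); with this convention the space forms
   satisfy R_ijkh = kappa (g_ik g_jh - g_ih g_jk), consistent with the Weyl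
   tensor formula of the paper, and rho_jh = g^ik R_ijkh. *)
Definition Rm (g : metric) (i j k h : 'I_4) (x : pt) : R :=
  \sum_(m < 4) Rup g i j h m x * g m k x.

Definition ricci (g : metric) (j h : 'I_4) (x : pt) : R :=
  \sum_(i < 4) \sum_(k < 4) ginv g i k x * Rm g i j k h x.

Definition scal (g : metric) (x : pt) : R :=
  \sum_(j < 4) \sum_(h < 4) ginv g j h x * ricci g j h x.

Definition weyl (g : metric) (i j k h : 'I_4) (x : pt) : R :=
  Rm g i j k h x
  - 2^-1 * (g i k x * ricci g j h x + g j h x * ricci g i k x
            - g i h x * ricci g j k x - g j k x * ricci g i h x)
  + scal g x / 6%:R * (g i k x * g j h x - g i h x * g j k x).

Definition Einstein (g : metric) (U : set pt) : Prop :=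
  exists c : R, forall x, U x -> forall i j, ricci g i j x = c * g i j x.

Definition RicciFlat (g : metric) (U : set pt) : Prop :=
  forall x, U x -> forall i j, ricci g i j x = 0.

Definition ConformallyFlat (g : metric) (U : set pt) : Prop :=
  forall x, U x -> forall i j k h, weyl g i j k h x = 0.

(* The metric of the theorem:
   g = 2 dx^1 dx^4 + (dx^2)^2 + (dx^3)^2 + F (dx^4)^2, with
   F = x^4 (a (x^2)^2 + b (x^3)^2) + p (x^2)^2 + 2 q x^2 x^3 + s (x^3)^2.
   Indices 0,1,2,3 correspond to x^1, x^2, x^3, x^4. *)
Definition Fcoef (a b p q s : R) (x : pt) : R :=
  x 0 3 * (a * x 0 1 ^+ 2 + b * x 0 2 ^+ 2)
  + p * x 0 1 ^+ 2 + 2%:R * q * x 0 1 * x 0 2 + s * x 0 2 ^+ 2.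

Definition gW (a b p q s : R) : metric := fun i j x =>
  if ((val i == 0%N) && (val j == 3%N)) || ((val i == 3%N) && (val j == 0%N)) then 1
  else if (val i == 1%N) && (val j == 1%N) then 1
  else if (val i == 2%N) && (val j == 2%N) then 1
  else if (val i == 3%N) && (val j == 3%N) then Fcoef a b p q s x
  else 0.

End Riem.

(* Main.v *)
Require Import Defs.
From HB Require Import structures.
From mathcomp Require Import all_boot all_order all_algebra.
From mathcomp Require Import all_classical all_reals all_analysis.
From mathcomp Require Import ring lra.
Import Order.TTheory GRing.Theory Num.Theory.
Import numFieldNormedType.Exports.
Local Open Scope ring_scope.
Local Open Scope classical_set_scope.

Section Comp.
Variable R : realType.
Variables a b p q s : R.
Implicit Types (x v : pt R).
Definition o0 : 'I_4 := @Ordinal 4 0 isT.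
Definition o1 : 'I_4 := @Ordinal 4 1 isT.
Definition o2 : 'I_4 := @Ordinal 4 2 isT.
Definition o3 : 'I_4 := @Ordinal 4 3 isT.
Definition dl (i : 'I_4) (k : nat) : R := if val i == k then 1 else 0.
Lemma evecE (i k : 'I_4) : evec R i 0 k = dl i k.
Proof.
rewrite /evec mxE eqxx /= /dl.
have -> : (k == i) = (val i == val k) by rewrite eq_sym.
by case: (val i == val k).
Qed.
Lemma dCoord x v (j : 'I_4) : is_derive x v (fun y : pt R => y 0 j) (v 0 j).
Proof.
have hd : derivable (@id (pt R)) x v by exact: derivable_id.
split.
  by move/derivable_mxP: hd => /(_ 0 j).
have := derive_mx hd; rewrite derive_val => /(congr1 (fun M : pt R => M 0 j)).
by rewrite mxE => ->.
Qed.
Lemma dAdd (f h : pt R -> R) x v df dh : is_derive x v f df -> is_derive x v h dh ->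
  is_derive x v (fun y => f y + h y) (df + dh).
Proof. move=> H1 H2; exact: (is_deriveD H1 H2). Qed.
Lemma dSub (f h : pt R -> R) x v df dh : is_derive x v f df -> is_derive x v h dh ->
  is_derive x v (fun y => f y - h y) (df - dh).
Proof. move=> H1 H2; exact: (is_deriveB H1 H2). Qed.
Lemma dMul (f h : pt R -> R) x v df dh : is_derive x v f df -> is_derive x v h dh ->
  is_derive x v (fun y => f y * h y) (f x * dh + h x * df).
Proof. move=> H1 H2; exact: (is_deriveM H1 H2). Qed.
Lemma dCst (c : R) x v : is_derive x v (fun _ : pt R => c) 0.
Proof. exact: is_derive_cst. Qed.
Lemma dSq (f : pt R -> R) x v df : is_derive x v f df -> is_derive x v (fun y => f y ^+ 2) (f x * df + f x * df).
Proof.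
move=> H; have -> : (fun y => f y ^+ 2) = (fun y => f y * f y).
  by apply/funext => y; rewrite expr2.
exact: dMul.
Qed.
Ltac der := repeat first
 [ match goal with |- is_derive _ _ (fun y => @?A y + @?B y) _ => apply: (@dAdd A B) end
 | match goal with |- is_derive _ _ (fun y => @?A y - @?B y) _ => apply: (@dSub A B) end
 | match goal with |- is_derive _ _ (fun y => @?A y * @?B y) _ => apply: (@dMul A B) end
 | match goal with |- is_derive _ _ (fun y => @?A y ^+ 2) _ => apply: (@dSq A) end
 | apply: dCoord
 | apply: dCst ].

Definition dF (i : 'I_4) (y : pt R) : R :=
  dl i 1 * (2 * a * y 0 3 * y 0 1 + 2 * p * y 0 1 + 2 * q * y 0 2)
  + dl i 2 * (2 * b * y 0 3 * y 0 2 + 2 * q * y 0 1 + 2 * s * y 0 2)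
  + dl i 3 * (a * y 0 1 ^+ 2 + b * y 0 2 ^+ 2).
Lemma m1 : (1 %% 4 = 1)%N. Proof. by []. Qed.
Lemma m2 : ((1 + 1) %% 4 = 2)%N. Proof. by []. Qed.
Lemma m3 : ((1 + 2) %% 4 = 3)%N. Proof. by []. Qed.
Lemma scE (k x : R) : k *: x = k * x. Proof. by []. Qed.
Ltac simpd := rewrite ?scE ?m1 ?m2 ?m3.
Instance der_F i y : is_derive y (evec R i) (Fcoef a b p q s) (dF i y).
Proof.
rewrite /Fcoef; eapply is_derive_eq; first by der.
rewrite !evecE /dF; simpd; ring.
Qed.

Definition ddF (i j : 'I_4) (y : pt R) : R :=
  dl j 1 * (dl i 1 * (2 * a * y 0 3 + 2 * p) + dl i 2 * (2 * q) + dl i 3 * (2 * a * y 0 1))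
  + dl j 2 * (dl i 1 * (2 * q) + dl i 2 * (2 * b * y 0 3 + 2 * s) + dl i 3 * (2 * b * y 0 2))
  + dl j 3 * (dl i 1 * (2 * a * y 0 1) + dl i 2 * (2 * b * y 0 2)).
Instance der_dF i j y : is_derive y (evec R i) (dF j) (ddF i j y).
Proof.
rewrite {1}/dF; eapply is_derive_eq; first by der.
rewrite !evecE /ddF; simpd; ring.
Qed.
Ltac der2 := repeat first
 [ match goal with |- is_derive _ _ (fun y => @?A y + @?B y) _ => apply: (@dAdd A B) end
 | match goal with |- is_derive _ _ (fun y => @?A y - @?B y) _ => apply: (@dSub A B) end
 | match goal with |- is_derive _ _ (fun y => @?A y * @?B y) _ => apply: (@dMul A B) end
 | apply: dCst
 | apply: der_F
 | apply: der_dF ].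

Notation g := (gW a b p q s).
Ltac zsimp := rewrite ?(mul0r, mulr0, add0r, addr0, mul1r, mulr1, subr0, sub0r, oppr0, subrr, mulN1r, mulrN1).
Lemma ord4P (P : 'I_4 -> Prop) : P o0 -> P o1 -> P o2 -> P o3 -> forall i, P i.
Proof.
move=> H0 H1 H2 H3 [[|[|[|[|n]]]] Hn] //.
- by rewrite (_ : Ordinal Hn = o0) //; apply: val_inj.
- by rewrite (_ : Ordinal Hn = o1) //; apply: val_inj.
- by rewrite (_ : Ordinal Hn = o2) //; apply: val_inj.
- by rewrite (_ : Ordinal Hn = o3) //; apply: val_inj.
Qed.
Lemma sum4 (F : 'I_4 -> R) : \sum_(i < 4) F i = F o0 + F o1 + F o2 + F o3.
Proof.
rewrite !big_ord_recr big_ord0 /= GRing.add0r.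
by congr (_ + _ + _ + _); congr F; apply: val_inj.
Qed.
Lemma dF0 x : dF o0 x = 0.
Proof. by rewrite /dF /dl /=; ring. Qed.
Lemma ddF0l j x : ddF o0 j x = 0.
Proof. by rewrite /ddF /dl /=; ring. Qed.
Lemma ddF0r j x : ddF j o0 x = 0.
Proof. by rewrite /ddF /dl /=; ring. Qed.

Definition G0 (i j : 'I_4) : R := dl i 0 * dl j 3 + dl i 3 * dl j 0 + dl i 1 * dl j 1 + dl i 2 * dl j 2.
Lemma gWE i j x : g i j x = G0 i j + dl i 3 * dl j 3 * Fcoef a b p q s x.
Proof.
case: i => [[|[|[|[|i]]]] Hi] //; case: j => [[|[|[|[|j]]]] Hj] //;
 rewrite /gW /G0 /dl /=; ring.
Qed.
Instance der_gW k i j x : is_derive x (evec R k) (g i j) (dl i 3 * dl j 3 * dF k x).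
Proof.
have -> : g i j = fun y => G0 i j + dl i 3 * dl j 3 * Fcoef a b p q s y.
  by apply/funext => y; rewrite gWE.
eapply is_derive_eq; first by der2.
rewrite ?scE; ring.
Qed.
Lemma partial_gW k i j x : partial k (g i j) x = dl i 3 * dl j 3 * dF k x.
Proof. exact: derive_val. Qed.

Definition GI (k l : 'I_4) (x : pt R) : R := G0 k l - dl k 0 * dl l 0 * Fcoef a b p q s x.
Lemma ginvE k l x : ginv g k l x = GI k l x.
Proof.
rewrite /ginv.
have H : gmat g x *m (\matrix_(i, j) GI i j x) = 1%:M.
  apply/matrixP => i j; rewrite !mxE sum4 !mxE !gWE /GI /G0.
  move: i j; apply: ord4P; apply: ord4P; rewrite /dl /=; ring.
have [uA _] := mulmx1_unit H.
have -> : invmx (gmat g x) = \matrix_(i, j) GI i j x.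
  by rewrite -[RHS](mulKmx uA) H mulmx1.
by rewrite mxE.
Qed.


Definition Gam (m i j : 'I_4) (y : pt R) : R :=
  2^-1 * (dl m 0 * (dl j 3 * dF i y + dl i 3 * dF j y - dl i 3 * dl j 3 * dF o3 y)
          - (dl m 1 + dl m 2) * dl i 3 * dl j 3 * dF m y).
Lemma christoffelE m i j x : christoffel g m i j x = Gam m i j x.
Proof.
rewrite /christoffel sum4 !ginvE !partial_gW /Gam /GI /G0.
move: m i j; apply: ord4P; apply: ord4P; apply: ord4P; rewrite /dl /= ?dF0; ring.
Qed.
Lemma chF : christoffel g = Gam.
Proof.
apply/funext => m; apply/funext => i; apply/funext => j; apply/funext => x.
exact: christoffelE.
Qed.
Definition dGam (k m i j : 'I_4) (y : pt R) : R :=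
  2^-1 * (dl m 0 * (dl j 3 * ddF k i y + dl i 3 * ddF k j y - dl i 3 * dl j 3 * ddF k o3 y)
          - (dl m 1 + dl m 2) * dl i 3 * dl j 3 * ddF k m y).
Instance der_Gam k m i j y : is_derive y (evec R k) (Gam m i j) (dGam k m i j y).
Proof.
rewrite {1}/Gam; eapply is_derive_eq; first by der2.
rewrite /dGam; simpd; ring.
Qed.
Lemma partial_Gam k m i j y : partial k (Gam m i j) y = dGam k m i j y.
Proof. exact: derive_val. Qed.
Definition RupC (i j k m : 'I_4) (x : pt R) : R :=
  dGam i m j k x - dGam j m i k x
  + \sum_(l < 4) (Gam l j k x * Gam m i l x - Gam l i k x * Gam m j l x).
Lemma RupE i j k m x : Rup g i j k m x = RupC i j k m x.
Proof. by rewrite /Rup chF !partial_Gam. Qed.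
Definition Aterm (i j h k : 'I_4) (x : pt R) : R :=
  2^-1 * (dl k 3 * (dl h 3 * ddF i j x + dl j 3 * ddF i h x - dl j 3 * dl h 3 * ddF i o3 x)
     - dl j 3 * dl h 3 * (dl k 1 * ddF i o1 x + dl k 2 * ddF i o2 x)).
Definition RmC (i j k h : 'I_4) (x : pt R) : R := Aterm i j h k x - Aterm j i h k x.
Lemma RmE i j k (h : 'I_4) x : Rm g i j k h x = RmC i j k h x.
Proof.
rewrite /Rm sum4 !RupE !gWE /RupC !sum4 /Gam /dGam /RmC /Aterm /G0 ?dF0 ?ddF0l ?ddF0r.
rewrite /dl /=; ring.
Qed.
Definition RicC (j h : 'I_4) (x : pt R) : R :=
  - 2^-1 * dl j 3 * dl h 3 * (ddF o1 o1 x + ddF o2 o2 x).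
Lemma ricciE j h x : ricci g j h x = RicC j h x.
Proof.
rewrite /ricci.
under eq_bigr => i _ do under eq_bigr => k _ do rewrite ginvE RmE.
rewrite !sum4.
rewrite /GI /G0 /RmC /Aterm /RicC ?ddF0l ?ddF0r.
rewrite /dl /=.
ring.
Qed.
Lemma scalE x : scal g x = 0.
Proof.
rewrite /scal.
under eq_bigr => i _ do under eq_bigr => k _ do rewrite ginvE ricciE.
rewrite !sum4 /GI /G0 /RicC /dl /=.
ring.
Qed.
Lemma sumdd x : ddF o1 o1 x + ddF o2 o2 x = 2 * ((a + b) * x 0 3 + (p + s)).
Proof. rewrite /ddF /dl /=; ring. Qed.
Lemma ric33 x : ricci g o3 o3 x = - ((a + b) * x 0 3 + (p + s)).
Proof. rewrite ricciE /RicC sumdd /dl /=; field; done. Qed.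
Lemma ric03 x : ricci g o0 o3 x = 0.
Proof. rewrite ricciE /RicC /dl /=; ring. Qed.
Lemma g03 x : g o0 o3 x = 1.
Proof. by []. Qed.
Lemma W1 x : weyl g o1 o3 o1 o3 x = ((b - a) * x 0 3 + s - p) / 2.
Proof.
rewrite /weyl RmE !ricciE scalE !gWE /RmC /Aterm /RicC /G0 /ddF /dl /=; field; done.
Qed.
Lemma W2 x : weyl g o1 o3 o2 o3 x = - q.
Proof.
rewrite /weyl RmE !ricciE scalE !gWE /RmC /Aterm /RicC /G0 /ddF /dl /=; field; done.
Qed.
Lemma weyl_anti i j k (h : 'I_4) x : weyl g i j k h x = - weyl g j i k h x.
Proof.
rewrite /weyl !RmE /RmC.
move: (gW a b p q s) (ricci g) (scal g x) (@Aterm) => G Ric S A; ring.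
Qed.
Lemma weyl_diag i k (h : 'I_4) x : weyl g i i k h x = 0.
Proof.
rewrite /weyl RmE /RmC.
move: (gW a b p q s) (ricci g) (scal g x) (@Aterm) => G Ric S A; ring.
Qed.
Lemma weyl_pair : b = a -> s = p -> q = 0 ->
  forall i j : 'I_4, (i < j)%N -> forall k (h : 'I_4) x, weyl g i j k h x = 0.
Proof.
move=> Hb Hs Hq; apply: ord4P; apply: ord4P => /= Hlt; try done;
move=> k h x;
rewrite /weyl RmE !ricciE scalE !gWE /RmC /Aterm /RicC /G0 /ddF Hb Hs Hq;
move: k h; apply: ord4P; apply: ord4P; rewrite /dl /=; field; done.
Qed.
Lemma weyl0 : b = a -> s = p -> q = 0 -> forall i j k (h : 'I_4) x, weyl g i j k h x = 0.
Proof.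
move=> Hb Hs Hq i j k h x.
case: (ltngtP i j) => [lt|gt|eq].
- exact: weyl_pair.
- by rewrite weyl_anti (weyl_pair Hb Hs Hq) ?oppr0.
- have -> : j = i by apply: val_inj.
  exact: weyl_diag.
Qed.
Lemma shift_in (U : set (pt R)) x : open U -> U x ->
  exists h : R, h != 0 /\ U (x + h *: evec R o3).
Proof.
move=> oU Ux.
have nU : nbhs x U by apply: open_nbhs_nbhs; split.
have hc : (fun h : R => x + h *: evec R o3) @ (0:R) --> x + 0 *: evec R o3.
  apply: cvgD; first exact: cvg_cst.
  exact: cvgZr_tmp.
rewrite scale0r addr0 in hc.
have := hc U nU.
move/nbhs_norm0P => [e /= e0 He].
exists (e / 2); split.
  by rewrite mulf_neq0 // ?gt_eqF // invr_gt0.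
apply: He => /=.
rewrite ger0_norm; last by rewrite divr_ge0 // ltW.
by rewrite ltr_pdivrMr // ltr_pMr // ltr1n.
Qed.
Lemma coord3 x (h : R) : (x + h *: evec R o3) 0 3 = x 0 3 + h.
Proof. by rewrite !mxE /= mulr1. Qed.
End Comp.

Theorem mainTheorem2 (R : realType) (U : set (pt R)) (a b p q s : R) :
  open U -> U !=set0 -> a ^+ 2 + b ^+ 2 != 0 ->
  ((Einstein (gW a b p q s) U <-> RicciFlat (gW a b p q s) U) /\
   (RicciFlat (gW a b p q s) U <-> (b = - a /\ s = - p))) /\
  (ConformallyFlat (gW a b p q s) U <-> (b = a /\ s = p /\ q = 0)).
Proof.
move=> oU [x0 Ux0] _.
have [h [hn0 Uh]] := @shift_in R U x0 oU Ux0.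
set x1 := x0 + h *: evec R o3.
have c3 : x1 0 3 = x0 0 3 + h by rewrite coord3.
split; [split|].
- split.
  + move=> [c Hc] x Ux i j.
    have := Hc x Ux o0 o3; rewrite ric03 g03 mulr1 => c0.
    by rewrite Hc // -c0 mul0r.
  + move=> H; exists 0 => x Ux i j; rewrite mul0r; exact: H.
- split.
  + move=> H.
    have E1 := H x0 Ux0 o3 o3; have E2 := H x1 Uh o3 o3.
    rewrite ric33 in E1; rewrite ric33 c3 in E2.
    have : (a + b) * h = 0.
      have -> : (a + b) * h = (- ((a + b) * x0 0 3 + (p + s)))
          - (- ((a + b) * (x0 0 3 + h) + (p + s))) by ring.
      by rewrite E1 E2 subr0.
    move/eqP; rewrite mulf_eq0 (negbTE hn0) orbF => /eqP ab0.
    move: E1; rewrite ab0 mul0r add0r => /eqP; rewrite oppr_eq0 => /eqP ps0.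
    split; lra.
  + move=> [hb hs] x Ux i j.
    rewrite ricciE /RicC sumdd hb hs; ring.
- split.
  + move=> H.
    have A1 := H x0 Ux0 o1 o3 o1 o3; have A2 := H x1 Uh o1 o3 o1 o3.
    have Q := H x0 Ux0 o1 o3 o2 o3.
    rewrite W1 in A1; rewrite W1 c3 in A2; rewrite W2 in Q.
    have : (b - a) * h = 0.
      have -> : (b - a) * h = 2 * (((b - a) * (x0 0 3 + h) + s - p) / 2)
          - 2 * (((b - a) * x0 0 3 + s - p) / 2) by field.
      by rewrite A1 A2 mulr0 subr0.
    move/eqP; rewrite mulf_eq0 (negbTE hn0) orbF subr_eq0 => /eqP ba.
    move: A1; rewrite ba subrr mul0r add0r => sp.
    split => //; split; lra.
  + move=> [hb [hs hq]] x Ux i j k h'.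
    exact: weyl0.
Qed.
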